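(* Let $H$ and $K$ be subgroups of a finite group $G$ such that $HK$ is a subgroup and $|H|_2=|H\cap K|_2$. Then $H\cap K$ is a perfect code of $K$ if and only if $H$ is a perfect code of $HK$.
   Context: $|X|_2$ denotes the largest power of $2$ dividing $|X|$. For a group $G$ with identity $e$ and an inverse-closed subset $S\subseteq G\setminus\{e\}$, the Cayley graph $\mathrm{Cay}(G,S)$ has vertex set $G$ and edges $\{g,sg\}$ for $s\in S$, $g\in G$. A perfect code in a graph is an independent set $C$ of vertices such that every vertex outside $C$ is adjacent to exactly one vertex of $C$. A subgroup $H$ of $G$ is a perfect code of $G$ if some Cayley graph of $G$ admits $H$ as a perfect code. *)

(* Defs.v *)
From mathcomp Require Import all_boot all_fingroup.
Set Implicit Arguments. Unset Strict Implicit. Unset Printing Implicit Defensive.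
Local Open Scope group_scope.

Section PerfectCode.
Variable gT : finGroupType.

(* Adjacency in Cay(G,S): edge {g, s g} for s in S, i.e. x ~ y iff y x^-1 in S. *)
Definition cay_adj (S : {set gT}) (x y : gT) : bool := y * x^-1 \in S.

Definition cayley_set (G S : {set gT}) : Prop :=
  S \subset G :\ 1 /\ [set s^-1 | s in S] = S.

Definition perfect_code_in (G S C : {set gT}) : Prop :=
  [/\ C \subset G,
      (forall x y, x \in C -> y \in C -> ~~ cay_adj S x y)
    & (forall x, x \in G :\: C -> #|[set c in C | cay_adj S c x]| = 1%N)].

Definition group_perfect_code (G H : {set gT}) : Prop :=
  exists S : {set gT}, cayley_set G S /\ perfect_code_in G S H.

End PerfectCode.

(* Main.v *)
Require Import Defs.
From mathcomp Require Import all_boot all_fingroup all_solvable.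
Set Implicit Arguments. Unset Strict Implicit. Unset Printing Implicit Defensive.
Local Open Scope group_scope.

Section Aux.
Variable gT : finGroupType.
Implicit Types (A G : {group gT}) (S U V : {set gT}) (x y u v : gT).

Definition dc (A : {set gT}) x := [set a * x * b | a in A, b in A].

Lemma dcP (A : {set gT}) x y :
  reflect (exists2 a, a \in A & exists2 b, b \in A & y = a * x * b) (y \in dc A x).
Proof.
apply: (iffP imset2P) => [[a b Aa Ab ->]|[a Aa [b Ab ->]]]; first by exists a => //; exists b.
by exists a b.
Qed.

Lemma dc_refl A x : x \in dc A x.
Proof. by apply/dcP; exists 1 => //; exists 1 => //; rewrite mul1g mulg1. Qed.

Lemma dc_trans A x y z : y \in dc A x -> z \in dc A y -> z \in dc A x.
Proof.
move=> /dcP[a Aa [b Ab ->]] /dcP[c Ac [d Ad ->]].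
by apply/dcP; exists (c * a); rewrite ?groupM //; exists (b * d); rewrite ?groupM // !mulgA.
Qed.

Lemma dc_sym A x y : y \in dc A x -> x \in dc A y.
Proof.
move=> /dcP[a Aa [b Ab ->]]; apply/dcP; exists a^-1; rewrite ?groupV //.
by exists b^-1; rewrite ?groupV // !mulgA mulVg mul1g mulgK.
Qed.

Lemma dc_inv A x y : y \in dc A x -> y^-1 \in dc A x^-1.
Proof.
move=> /dcP[a Aa [b Ab ->]]; apply/dcP; exists b^-1; rewrite ?groupV //.
by exists a^-1; rewrite ?groupV // !invMg mulgA.
Qed.

Lemma rcoset_dc A x y : y \in A :* x -> y \in dc A x.
Proof.
rewrite mem_rcoset => Ay; apply/dcP; exists (y * x^-1) => //; exists 1 => //.
by rewrite mulg1 mulgKV.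
Qed.

Lemma card_rcoset_dc A u x : #|A :* u :&: dc A x| = ((u \in dc A x) * #|A|)%N.
Proof.
case: (boolP (u \in dc A x)) => ux.
  rewrite mul1n -(card_rcoset A u) (setIidPl _) //; apply/subsetP => y yu.
  exact: dc_trans ux (rcoset_dc yu).
rewrite mul0n; apply/eqP; rewrite cards_eq0; apply/eqP/setP => y; rewrite !inE.
apply/negP => /andP[yu yx]; case/negP: ux.
exact: dc_trans yx (dc_sym (rcoset_dc yu)).
Qed.

Lemma inv_sq x : x * x = 1 -> x^-1 = x.
Proof. by move=> h; rewrite -[x^-1]mulg1 -h mulKg. Qed.

Lemma parity_inv (n : nat) S : #|S| <= n -> {in S, forall s, s^-1 \in S} -> odd #|S| ->
  exists2 t, t \in S & t * t = 1.
Proof.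
elim: n S => [|n IH] S.
  by rewrite leqn0 => /eqP ->.
move=> Sn Sinv oS.
have [t St] : exists t, t \in S.
  by apply/set0Pn; apply: contraTneq oS => ->; rewrite cards0.
case: (eqVneq (t * t) 1) => [tt|ntt]; first by exists t.
have tnt : t^-1 != t by apply: contra ntt => /eqP e; rewrite -{1}e mulVg.
set S' := S :\: [set t; t^-1].
have cS : #|S| = (#|S'| + 2)%N.
  rewrite /S' cardsD (setIidPr _); last by apply/subsetP => y; rewrite !inE => /orP[]/eqP->//; exact: Sinv.
  rewrite cards2 eq_sym tnt.
  have : 2 <= #|S|.
    have -> : 2 = #|[set t; t^-1]| by rewrite cards2 eq_sym tnt.
    apply: subset_leq_card.
    by apply/subsetP => y; rewrite !inE => /orP[]/eqP->//; exact: Sinv.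
  by move=> h; rewrite subnK.
have h1 : #|S'| <= n by move: Sn; rewrite cS addn2 ltnS => /ltnW.
have h2 : {in S', forall s, s^-1 \in S'}.
  move=> s; rewrite !inE => /andP[ns Ss]; rewrite Sinv // andbT.
  apply: contra ns => /orP[]/eqP e.
    by rewrite -[s]invgK e eqxx orbT.
  by rewrite -[s]invgK e invgK eqxx.
have h3 : odd #|S'| by move: oS; rewrite cS addn2 /= negbK.
have [s Ss ss] := IH S' h1 h2 h3.
by exists s => //; move: Ss; rewrite inE => /andP[].
Qed.


Definition good (G A S : {set gT}) :=
  [/\ S \subset G, {in S, forall s, s^-1 \in S}, {in S, forall s, s \notin A}
    & {in G, forall x, x \notin A -> #|S :&: A :* x| = 1%N}].

Lemma count_adj (A S : {set gT}) x : {in S, forall s, s^-1 \in S} ->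
  #|[set c in A | cay_adj S c x]| = #|S :&: A :* x^-1|.
Proof.
move=> Sinv; rewrite -(card_imset _ (mulIg x^-1)); apply: eq_card => y.
rewrite !inE mem_rcoset invgK; apply/imsetP/andP => [[c] | [Sy Ay]].
  rewrite inE /cay_adj => /andP[Ac Sc] ->; split; last by rewrite mulgKV.
  by rewrite -[c * x^-1]invgK invMg invgK Sinv.
exists (y * x); last by rewrite mulgK.
by rewrite inE Ay /cay_adj invMg mulKVg Sinv.
Qed.

Lemma pc_good G A : A \subset G -> group_perfect_code G A <-> exists S, good G A S.
Proof.
move=> sAG; split.
  case=> S [[sS iS] [_ ind cnt]].
  have Sinv : {in S, forall s, s^-1 \in S}.
    by move=> s Ss; rewrite -iS; apply: imset_f.
  exists S; split => //.
  - by apply: subset_trans sS _; apply/subsetP => y; rewrite !inE => /andP[].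
  - move=> s Ss; apply/negP => As.
    by have := ind 1 s (group1 A) As; rewrite /cay_adj invg1 mulg1 Ss.
  - by move=> x Gx nAx; rewrite -[x]invgK -count_adj // cnt // inE !groupV Gx nAx.
case=> S [sSG Sinv nSA cnt]; exists S; split; [split|split] => //.
- apply/subsetP => s Ss; rewrite !inE (subsetP sSG) // andbT.
  by apply: contraNneq (nSA s Ss) => ->.
- apply/setP => s; apply/imsetP/idP => [[t St ->]|Ss]; first exact: Sinv.
  by exists s^-1; rewrite ?invgK // Sinv.
- move=> x y Ax Ay; rewrite /cay_adj; apply: contraT; rewrite negbK => Sxy.
  by have := nSA _ Sxy; rewrite groupM ?groupV.
- move=> x; rewrite inE => /andP[nAx Gx]; rewrite count_adj // cnt ?groupV //.
Qed.

Lemma rc_trans A u w y : y \in A :* w -> w \in A :* u -> y \in A :* u.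
Proof. by rewrite !mem_rcoset => h1 h2; rewrite -(mulgKV w y) -mulgA groupM. Qed.

Lemma rc_sym A w y : y \in A :* w -> w \in A :* y.
Proof. by rewrite !mem_rcoset => h; rewrite -[w * y^-1]invgK invMg invgK groupV. Qed.

Lemma rc_same A u w y : y \in A :* u -> (y \in A :* w) = (w \in A :* u).
Proof.
move=> yu; apply/idP/idP => h; first exact: rc_trans (rc_sym h) yu.
exact: rc_trans yu (rc_sym h).
Qed.

Lemma card_setU1I z S0 B : z \notin S0 -> #|(z |: S0) :&: B| = ((z \in B) + #|S0 :&: B|)%N.
Proof.
move=> zS0; rewrite setIUl; case: (boolP (z \in B)) => zB.
  have -> : [set z] :&: B = [set z] by apply/setIidPl; rewrite sub1set.
  by rewrite cardsU1 inE (negPf zS0).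
have -> : [set z] :&: B = set0.
  by apply/setP => y; rewrite !inE; case: eqP => // ->; rewrite (negPf zB).
by rewrite set0U.
Qed.

Definition linv (A U : {set gT}) := forall a w, a \in A -> w \in U -> a * w \in U.

Lemma linvD A U R : linv A U -> linv A R -> linv A (U :\: R).
Proof.
move=> iU iR a w Aa; rewrite !inE => /andP[nR Uw]; rewrite iU // andbT.
by apply: contra nR => h; rewrite -(mulKg a w) iR ?groupV.
Qed.

Lemma linv_rc A u : linv A (A :* u).
Proof. by move=> a w Aa; rewrite !mem_rcoset -mulgA (groupMl _ Aa). Qed.

Lemma linvU A U R : linv A U -> linv A R -> linv A (U :|: R).
Proof. by move=> iU iR a w Aa; rewrite !inE => /orP[h|h]; rewrite ?(iU a w Aa h) ?(iR a w Aa h) ?orbT. Qed.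

Lemma rc_sub A U u : linv A U -> u \in U -> A :* u \subset U.
Proof. by move=> iU Uu; apply/subsetP => y; rewrite mem_rcoset => h; rewrite -(mulgKV u y) iU. Qed.

Lemma step_single A U u t S' : u \in U -> linv A U -> t \in A :* u -> t * t = 1 ->
  S' \subset U :\: A :* u -> {in S', forall s, s^-1 \in S'} ->
  {in U :\: A :* u, forall w, #|S' :&: A :* w| = 1%N} ->
  [/\ t |: S' \subset U, {in t |: S', forall s, s^-1 \in t |: S'}
    & {in U, forall w, #|(t |: S') :&: A :* w| = 1%N}].
Proof.
move=> Uu iU tu tt sS iS cS.
have tS : t \notin S' by apply/negP => /(subsetP sS); rewrite inE tu.
split.
- rewrite subUset sub1set (subsetP (rc_sub iU Uu)) //=.
  by apply: subset_trans sS _; apply: subsetDl.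
- move=> s; rewrite !inE => /orP[/eqP->|Ss]; first by rewrite inv_sq // eqxx.
  by rewrite iS ?orbT.
move=> w Uw; rewrite card_setU1I // (rc_same _ tu).
case: (boolP (w \in A :* u)) => wu.
  rewrite add1n; congr (_.+1); apply/eqP; rewrite cards_eq0; apply/eqP/setP => y.
  rewrite !inE; apply/negP => /andP[Sy yw].
  by have := subsetP sS y Sy; rewrite !inE (rc_trans yw wu).
by rewrite add0n cS // inE wu.
Qed.

Lemma step_pair A U u v s S' : u \in U -> v \in U -> linv A U ->
  s \in A :* u -> s^-1 \in A :* v -> v \notin A :* u ->
  S' \subset U :\: (A :* u :|: A :* v) -> {in S', forall s, s^-1 \in S'} ->
  {in U :\: (A :* u :|: A :* v), forall w, #|S' :&: A :* w| = 1%N} ->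
  [/\ s |: (s^-1 |: S') \subset U, {in s |: (s^-1 |: S'), forall y, y^-1 \in s |: (s^-1 |: S')}
    & {in U, forall w, #|(s |: (s^-1 |: S')) :&: A :* w| = 1%N}].
Proof.
move=> Uu Uv iU su sv vu sS iS cS.
have nS y : y \in A :* u :|: A :* v -> y \notin S'.
  by move=> h; apply/negP => /(subsetP sS); rewrite inE h.
have svu : s^-1 \notin A :* u.
  by apply: contra vu => h; apply: rc_trans (rc_sym sv) h.
have suv : s \notin A :* v.
  by apply: contra vu => h; rewrite -(rc_same _ su).
have nss : s \notin s^-1 |: S'.
  rewrite !inE negb_or nS ?inE ?su // andbT.
  by apply: contra svu => /eqP <-.
split.
- rewrite !subUset !sub1set (subsetP (rc_sub iU Uu)) // (subsetP (rc_sub iU Uv)) //=.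
  by apply: subset_trans sS _; apply: subsetDl.
- move=> y; rewrite !inE => /orP[/eqP->|/orP[/eqP->|Sy]]; first by rewrite eqxx orbT.
    by rewrite invgK eqxx.
  by rewrite iS ?orbT.
move=> w Uw; rewrite card_setU1I // card_setU1I ?nS ?inE ?sv ?orbT //.
rewrite (rc_same _ su) (rc_same _ sv).
case: (boolP (w \in A :* u)) => wu.
  have wv : w \notin A :* v by apply: contra vu => h; apply: rc_trans (rc_sym h) wu.
  rewrite (negPf wv) add1n add0n; congr (_.+1); apply/eqP; rewrite cards_eq0; apply/eqP/setP => y.
  rewrite !inE; apply/negP => /andP[Sy yw].
  by have := subsetP sS y Sy; rewrite !inE (rc_trans yw wu).
case: (boolP (w \in A :* v)) => wv.
  rewrite add0n add1n; congr (_.+1); apply/eqP; rewrite cards_eq0; apply/eqP/setP => y.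
  rewrite !inE; apply/negP => /andP[Sy yw].
  by have := subsetP sS y Sy; rewrite !inE (rc_trans yw wv) orbT.
by rewrite !add0n cS // !inE negb_or wu wv.
Qed.

Lemma dc_iff A x y z : y \in dc A z -> (y \in dc A x) = (z \in dc A x).
Proof.
move=> yz; apply/idP/idP => h; first exact: dc_trans h (dc_sym yz).
exact: dc_trans h yz.
Qed.

Lemma dc_invE A x y : (y \in dc A x^-1) = (y^-1 \in dc A x).
Proof.
apply/idP/idP => h; first by rewrite -[x]invgK; apply: dc_inv.
by rewrite -[y]invgK; apply: dc_inv.
Qed.

Lemma dc_selfE A x y : x^-1 \in dc A x -> (y \in dc A x^-1) = (y \in dc A x).
Proof.
move=> sx; apply/idP/idP => h; first exact: dc_trans sx h.
exact: dc_trans (dc_sym sx) h.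
Qed.

Lemma cardDI (U R X : {set gT}) : R \subset U -> #|(U :\: R) :&: X| = (#|U :&: X| - #|R :&: X|)%N.
Proof.
move=> sRU; rewrite setIDAC cardsD; congr (_ - _); apply: eq_card => y.
rewrite !inE; apply/idP/idP => [/andP[/andP[_ ->] ->] //|/andP[Ry Xy]].
by rewrite Ry Xy (subsetP sRU).
Qed.

Lemma card_pairI A u v X : v \notin A :* u ->
  #|(A :* u :|: A :* v) :&: X| = (#|A :* u :&: X| + #|A :* v :&: X|)%N.
Proof.
move=> vu; rewrite setIUl cardsU; have -> : A :* u :&: X :&: (A :* v :&: X) = set0.
  apply/setP => y; rewrite !inE; apply/negP => /andP[/andP[yu _] /andP[yv _]].
  by case/negP: vu; apply: rc_trans (rc_sym yv) yu.
by rewrite cards0 subn0.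
Qed.

Definition Inv1 (A U : {set gT}) := forall x, x^-1 \in dc A x ->
  (2 * #|A| %| #|U :&: dc A x|) || [exists t in dc A x, t * t == 1].
Definition Inv2 (A U : {set gT}) := forall x, x^-1 \notin dc A x ->
  #|U :&: dc A x| = #|U :&: dc A x^-1|.

Lemma construct_rec A (n : nat) U : #|U| <= n -> linv A U -> Inv1 A U -> Inv2 A U ->
  exists S : {set gT}, [/\ S \subset U, {in S, forall s, s^-1 \in S}
    & {in U, forall w, #|S :&: A :* w| = 1%N}].
Proof.
elim: n U => [|n IH] U.
  rewrite leqn0 cards_eq0 => /eqP -> _ _ _; exists set0.
  by split; [exact: sub0set | move=> s; rewrite inE | move=> w; rewrite inE].
move=> cU iU I1 I2.
case: (set_0Vmem U) => [-> | [u Uu]].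
  by exists set0; split; [exact: sub0set | move=> s; rewrite inE | move=> w; rewrite inE].
have Au0 : 0 < #|A| by apply: cardG_gt0.
have uu := rcoset_refl A u.
have pair v : v \in U -> v \in dc A u^-1 -> v \notin A :* u ->
    exists S : {set gT}, [/\ S \subset U, {in S, forall s, s^-1 \in S}
      & {in U, forall w, #|S :&: A :* w| = 1%N}].
  move=> Uv vu' vu; set R := A :* u :|: A :* v.
  have sRU : R \subset U by rewrite subUset !rc_sub.
  have cR x : #|R :&: dc A x| = (((u \in dc A x) + (v \in dc A x)) * #|A|)%N.
    by rewrite card_pairI // !card_rcoset_dc mulnDl.
  have ev1 x : (v \in dc A x^-1) = (u \in dc A x).
    rewrite dc_invE; apply: dc_iff; rewrite -[u]invgK; exact: dc_inv.
  have ev2 x : (v \in dc A x) = (u \in dc A x^-1).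
    by rewrite dc_invE; apply: dc_iff.
  have [S' [sS iS cS]] : exists S' : {set gT}, [/\ S' \subset U :\: R, {in S', forall s, s^-1 \in S'}
      & {in U :\: R, forall w, #|S' :&: A :* w| = 1%N}].
    apply: IH.
    - rewrite cardsD (setIidPr sRU) leq_subLR; apply: leq_trans cU _.
      rewrite addnC -addn1 leq_add2l card_gt0; apply/set0Pn; exists u; rewrite !inE uu.
      done.
    - by apply: linvD => //; apply: linvU; apply: linv_rc.
    - move=> x sx; case/orP: (I1 x sx) => [d|->]; last by rewrite orbT.
      rewrite cardDI // cR -(dc_selfE v sx) ev1 addnn -mul2n mulnAC.
      by apply/orP; left; apply: dvdn_sub => //; apply: dvdn_mulr.
    - by move=> x sx; rewrite !cardDI // (I2 x sx) !cR ev1 ev2 addnC.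
  case/dcP: vu' => b Ab [c Ac ve].
  pose s := c^-1 * u.
  have su : s \in A :* u by rewrite mem_rcoset mulgK groupV.
  have sv : s^-1 \in A :* v.
    by rewrite mem_rcoset ve /s !invMg !invgK !mulgA mulgK mulVg mul1g groupV.
  exists (s |: (s^-1 |: S')); exact: (step_pair Uu Uv iU su sv vu sS iS cS).
case: (boolP (u^-1 \in dc A u)) => su.
  case/orP: (I1 u su) => [d|/existsP[t /andP[tu /eqP tt]]].
    have [v /setIP[Uv vd] vu] : exists2 v, v \in U :&: dc A u & v \notin A :* u.
      apply/exists_inP; rewrite -negb_forall_in; apply/negP => /forall_inP h.
      have : #|U :&: dc A u| <= #|A :* u| by apply/subset_leq_card/subsetP => y /h.
      rewrite card_rcoset leqNgt; case/negP.
      have N0 : 0 < #|U :&: dc A u| by rewrite card_gt0; apply/set0Pn; exists u; rewrite inE Uu dc_refl.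
      by apply: leq_trans (dvdn_leq N0 d); apply: ltn_Pmull.
    by apply: (pair v Uv) => //; apply: dc_trans (dc_sym su) vd.
  case/dcP: tu => a Aa [b Ab te].
  pose t' := b * t * b^-1.
  have tu' : t' \in A :* u by rewrite mem_rcoset /t' te !mulgA mulgK mulgK groupM.
  have tt' : t' * t' = 1 by rewrite /t' !mulgA mulgKV -(mulgA b) tt mulg1 mulgV.
  have sRU : A :* u \subset U by apply: rc_sub.
  have nux x : x^-1 \notin dc A x -> u \notin dc A x.
    move=> sx; apply/negP => ux; case/negP: sx.
    exact: dc_trans ux (dc_trans su (dc_inv (dc_sym ux))).
  have [S' [sS iS cS]] : exists S' : {set gT}, [/\ S' \subset U :\: A :* u,
      {in S', forall s, s^-1 \in S'} & {in U :\: A :* u, forall w, #|S' :&: A :* w| = 1%N}].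
    apply: IH.
    - rewrite cardsD (setIidPr sRU) leq_subLR; apply: leq_trans cU _.
      by rewrite addnC -addn1 leq_add2l card_gt0; apply/set0Pn; exists u.
    - by apply: linvD => //; apply: linv_rc.
    - move=> x sx; case/orP: (I1 x sx) => [d|->]; last by rewrite orbT.
      rewrite cardDI // card_rcoset_dc; case: (boolP (u \in dc A x)) => ux.
        apply/orP; right; apply/existsP; exists t; rewrite tt eqxx andbT.
        by apply: dc_trans ux _; rewrite te; apply/dcP; exists a => //; exists b.
      by rewrite mul0n subn0 d.
    - move=> x sx; rewrite !cardDI // !card_rcoset_dc (I2 x sx) (negPf (nux x sx)).
      have sx' : x^-1^-1 \notin dc A x^-1 by rewrite invgK; apply: contra sx; rewrite dc_invE.
      by rewrite (negPf (nux _ sx')).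
  by exists (t' |: S'); exact: (step_single Uu iU tu' tt' sS iS cS).
have [v /setIP[Uv vd]] : exists v, v \in U :&: dc A u^-1.
  apply/set0Pn; rewrite -card_gt0 -(I2 u su) card_gt0; apply/set0Pn; exists u.
  by rewrite inE Uu dc_refl.
apply: (pair v Uv vd); apply: contra su => h.
exact: dc_trans (rcoset_dc h) (dc_sym vd).
Qed.

Lemma card_dcV A x : #|dc A x^-1| = #|dc A x|.
Proof.
rewrite -[RHS](card_imset _ invg_inj); apply: eq_card => y.
rewrite dc_invE; apply/idP/imsetP => [h|[z zin ->]]; last by rewrite invgK.
by exists y^-1; rewrite ?invgK.
Qed.

Lemma construct A G : A \subset G ->
  (forall u, u \in G -> u \notin A -> u^-1 \in dc A u -> ~~ (2 * #|A| %| #|dc A u|) ->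
     exists2 t, t \in dc A u & t * t = 1) ->
  exists S, good G A S.
Proof.
move=> sAG hyp.
have dcsub x : x \in G :\: A -> dc A x \subset G :\: A.
  rewrite inE => /andP[nAx Gx]; apply/subsetP => y /dcP[a Aa [b Ab ->]].
  have Ga := subsetP sAG a Aa; have Gb := subsetP sAG b Ab.
  rewrite inE (groupM (groupM Ga Gx) Gb) andbT; apply: contra nAx => h.
  have -> : x = a^-1 * (a * x * b) * b^-1 by rewrite !mulgA mulVg mul1g mulgK.
  exact: groupM (groupM (groupVr Aa) h) (groupVr Ab).
have full x : x \in G :\: A -> (G :\: A) :&: dc A x = dc A x.
  by move=> h; apply/setIidPr; apply: dcsub.
have empt x : x \notin G :\: A -> (G :\: A) :&: dc A x = set0.
  move=> h; apply/setP => y; rewrite inE [y \in set0]inE; apply/negP => /andP[Uy yx].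
  by case/negP: h; apply: (subsetP (dcsub _ Uy)); apply: dc_sym.
have hl : linv A (G :\: A).
  move=> a w Aa; rewrite !inE => /andP[nAw Gw].
  by rewrite groupMl // nAw groupM // (subsetP sAG).
have h1 : Inv1 A (G :\: A).
  move=> x sx; case: (boolP (x \in G :\: A)) => h; last by rewrite empt // cards0 dvdn0.
  rewrite full //; case: (boolP (2 * #|A| %| #|dc A x|)) => //= d.
  move: h; rewrite inE => /andP[nAx Gx].
  have [t tx tt] := hyp x Gx nAx sx d.
  by apply/existsP; exists t; rewrite tx tt eqxx.
have h2 : Inv2 A (G :\: A).
  move=> x sx; case: (boolP (x \in G :\: A)) => h.
    have h' : x^-1 \in G :\: A by move: h; rewrite !inE groupV !groupV.
    by rewrite !full // card_dcV.
  have h' : x^-1 \notin G :\: A by move: h; rewrite !inE groupV !groupV.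
  by rewrite !empt.
have [S [sS iS cS]] := @construct_rec A #|G :\: A| (G :\: A) (leqnn _) hl h1 h2.
exists S; split.
- by apply: subset_trans sS _; apply: subsetDl.
- exact: iS.
- by move=> s /(subsetP sS); rewrite inE => /andP[].
- by move=> x Gx nAx; apply: cS; rewrite inE nAx.
Qed.

Lemma cardV_good G A S V : good G A S -> V \subset G -> {in V, forall v, v \notin A} ->
  linv A V -> #|V| = (#|A| * #|S :&: V|)%N.
Proof.
move=> [sSG iS nSA cS] sVG nVA iV.
have uniq1 s s' : s \in S -> s' \in S -> s \in A :* s' -> s = s'.
  move=> Ss Ss' ss'.
  have Gs' := subsetP sSG s' Ss'; have := cS s' Gs' (nSA s' Ss').
  move/eqP/cards1P => [z hz].
  have h1 : s \in S :&: A :* s' by rewrite inE Ss ss'.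
  have h2 : s' \in S :&: A :* s' by rewrite inE Ss' rcoset_refl.
  by move: h1 h2; rewrite hz !inE => /eqP-> /eqP->.
rewrite -cardsX -(card_in_imset (f := fun p => p.1 * p.2)).
  apply: eq_card => y; apply/idP/imsetP => [Vy|[[a s] /setXP[Aa /setIP[Ss Vs]] ->]]; last first.
    exact: iV.
  have := cS y (subsetP sVG y Vy) (nVA y Vy); move/eqP/cards1P => [s hs].
  have : s \in S :&: A :* y by rewrite hs inE.
  rewrite inE mem_rcoset => /andP[Ss Asy].
  have Vs : s \in V by rewrite -(mulgKV y s) iV.
  exists (y * s^-1, s); last by rewrite /= mulgKV.
  by rewrite inE /= inE Ss Vs !andbT -[y * s^-1]invgK invMg invgK groupV.
move=> [a s] [b t]; rewrite !inE /= => /andP[Aa /andP[Ss _]] /andP[Ab /andP[St _]] e.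
have st : s = t.
  apply: uniq1 => //; rewrite mem_rcoset.
  have -> : s * t^-1 = a^-1 * b by rewrite -(mulKg a s) e !mulgA mulgK.
  by rewrite groupM ?groupV.
by move: e; rewrite st => /mulIg ->.
Qed.

Lemma card_dc A u : #|dc A u| = (#|A| * #|A : A :&: A :^ u|)%N.
Proof.
have e : dc A u = u *: ((A :^ u) * A).
  apply/setP => y; apply/dcP/idP => [[a Aa [b Ab ->]]|].
    rewrite mem_lcoset; apply/mulsgP; exists (a ^ u) b; rewrite ?memJ_conjg //.
    by rewrite conjgE !mulgA.
  rewrite mem_lcoset => /mulsgP[c b]; rewrite mem_conjg => Ac Ab e.
  exists (c ^ u^-1) => //; exists b => //.
  by rewrite conjgE invgK !mulgA mulgKV -mulgA -e mulKVg.
apply/eqP; rewrite e card_lcoset -(eqn_pmul2r (cardG_gt0 (A :&: A :^ u))).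
rewrite -mulnA (mulnC #|A : _|) Lagrange ?subsetIl //; apply/eqP.
by rewrite -{1}(cardJg A u) mul_cardG; congr (_ * _)%N; apply: eq_card => y; rewrite !inE andbC.
Qed.

Lemma idx2 (M F : {group gT}) s : F \subset M -> s \in M -> s \notin F ->
  (forall g, g \in M -> g \notin F -> g * s^-1 \in F) -> #|M| = (2 * #|F|)%N.
Proof.
move=> sFM Ms nFs h.
have -> : M :=: F :|: F :* s.
  apply/setP => g; rewrite inE mem_rcoset; apply/idP/idP => [Mg|/orP[Fg|Fgs]].
  - by case: (boolP (g \in F)) => //= Fg; exact: h.
  - exact: subsetP sFM g Fg.
  - by rewrite -(mulgKV s g) groupM // (subsetP sFM).
rewrite cardsU card_rcoset; have -> : F :&: F :* s = set0.
  apply/setP => g; rewrite !inE mem_rcoset; apply/negP => /andP[Fg Fgs].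
  case/negP: nFs; have -> : s = (g * s^-1)^-1 * g by rewrite invMg invgK mulgKV.
  by rewrite groupM ?groupV.
by rewrite cards0 subn0 addnn mul2n.
Qed.

Definition fixb (H : {set gT}) u g := (g \in H) && (u * g * u^-1 \in H).
Definition swpb (H : {set gT}) u g := (g * u^-1 \in H) && (u * g \in H).

Section FS.
Variables (H : {group gT}) (u : gT).
Lemma fixM g h : fixb H u g -> fixb H u h -> fixb H u (g * h).
Proof.
move=> /andP[g1 g2] /andP[h1 h2]; apply/andP; split; first exact: groupM.
have -> : u * (g * h) * u^-1 = u * g * u^-1 * (u * h * u^-1) by rewrite !mulgA mulgKV.
exact: groupM.
Qed.
Lemma fixS g h : fixb H u g -> swpb H u h -> swpb H u (g * h).
Proof.
move=> /andP[g1 g2] /andP[h1 h2]; apply/andP; split.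
  by rewrite -mulgA; apply: groupM.
have -> : u * (g * h) = u * g * u^-1 * (u * h) by rewrite !mulgA mulgKV.
exact: groupM.
Qed.
Lemma swpF g h : swpb H u g -> fixb H u h -> swpb H u (g * h).
Proof.
move=> /andP[g1 g2] /andP[h1 h2]; apply/andP; split.
  have -> : g * h * u^-1 = g * u^-1 * (u * h * u^-1) by rewrite !mulgA mulgKV.
  exact: groupM.
by rewrite mulgA; apply: groupM.
Qed.
Lemma swpS g h : swpb H u g -> swpb H u h -> fixb H u (g * h).
Proof.
move=> /andP[g1 g2] /andP[h1 h2]; apply/andP; split.
  have -> : g * h = g * u^-1 * (u * h) by rewrite !mulgA mulgKV.
  exact: groupM.
have -> : u * (g * h) * u^-1 = u * g * (h * u^-1) by rewrite !mulgA.
exact: groupM.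
Qed.
Lemma fixV g : fixb H u g -> fixb H u g^-1.
Proof.
move=> /andP[g1 g2]; rewrite /fixb groupV g1.
have -> : u * g^-1 * u^-1 = (u * g * u^-1)^-1 by rewrite !invMg invgK !mulgA.
by rewrite groupV.
Qed.
Lemma swpV g : swpb H u g -> swpb H u g^-1.
Proof.
move=> /andP[g1 g2]; apply/andP; split; first by rewrite -invMg groupV.
have -> : u * g^-1 = (g * u^-1)^-1 by rewrite invMg invgK.
by rewrite groupV.
Qed.
Lemma fix_swp g : fixb H u g -> swpb H u g -> u \in H.
Proof.
move=> /andP[g1 _] /andP[g2 _]; rewrite -[u]invgK groupV.
have -> : u^-1 = g^-1 * (g * u^-1) by rewrite mulKg.
by rewrite groupM ?groupV.
Qed.
End FS.

Lemma dcS (A B : {set gT}) x y : A \subset B -> y \in dc A x -> y \in dc B x.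
Proof.
move=> sAB /dcP[a Aa [b Ab ->]]; apply/dcP; exists a; first exact: subsetP sAB a Aa.
by exists b => //; exact: subsetP sAB b Ab.
Qed.

Lemma part2 n : 0 < n -> ((2 * n)`_2 = 2 * n`_2)%N.
Proof. by move=> n0; rewrite partnM // part_pnat_id // pnat_id. Qed.

Lemma dir2_core (H K X : {group gT}) S u :
  H \subset X -> K \subset X -> (#|H|`_2)%N = (#|H :&: K|`_2)%N -> good X H S ->
  u \in K -> u \notin H :&: K -> u^-1 \in dc (H :&: K) u ->
  ~~ (2 * #|H :&: K| %| #|dc (H :&: K) u|) ->
  exists2 t, t \in dc (H :&: K) u & t * t = 1.
Proof.
move=> sHX sKX p2 gS Ku nDu su nd.
set D := (H :&: K)%G.
have sDH : D \subset H by apply: subsetIl.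
have sDK : D \subset K by apply: subsetIr.
have nHu : u \notin H by apply: contra nDu => Hu; rewrite inE Hu.
set L0 := (D :&: D :^ u)%G.
have nd' : ~~ (2 %| #|D : L0|).
  by move: nd; rewrite card_dc (mulnC #|D| #|D : _|) dvdn_pmul2r ?cardG_gt0.
have [Q sylQ] := Sylow_exists 2 L0.
have sL0D : L0 \subset D by apply: subsetIl.
have [sQL pQ iQ] := and3P sylQ.
have sylQD : 2.-Sylow(D) Q.
  rewrite /pHall (subset_trans sQL sL0D) pQ /=.
  by rewrite -(Lagrange_index sL0D sQL) pnatM iQ andbT p'natE.
have sQH : Q \subset H by apply: subset_trans sQL (subset_trans sL0D sDH).
have sylQH : 2.-Sylow(H) Q.
  apply/pHallP; split => //; rewrite (card_Hall sylQD) p2 //.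
set L' := (H :&: H :^ u)%G.
have sQL' : Q \subset L'.
  rewrite subsetI sQH; apply: subset_trans (subset_trans sQL (subsetIr _ _)) _.
  by rewrite conjSg.
have sL'H : L' \subset H by apply: subsetIl.
have sylQL' := pHall_subl sQL' sL'H sylQH.
have iHL' : 2^'.-nat #|H : L'|.
  have [_ _] := and3P sylQH; rewrite -(Lagrange_index sL'H sQL') pnatM.
  by case/andP.
have su' : u^-1 \in dc H u by apply: dcS sDH su.
have [sSX iS nSH cS] := gS.
have Xu : u \in X by apply: subsetP sKX u Ku.
have sVX : dc H u \subset X.
  apply/subsetP => y /dcP[a Ha [b Hb ->]].
  by rewrite !groupM // (subsetP sHX).
have nVH : {in dc H u, forall y, y \notin H}.
  move=> y yu; apply: contra nHu => Hy.
  case/dcP: (dc_sym yu) => a Ha [b Hb ->]; by rewrite !groupM.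
have lV : linv H (dc H u).
  move=> a w Ha wu; apply: dc_trans wu _; apply/dcP; exists a => //; exists 1 => //.
  by rewrite mulg1.
have cV := cardV_good gS sVX nVH lV.
have oSV : odd #|S :&: dc H u|.
  move: cV; rewrite card_dc => /eqP; rewrite eqn_pmul2l ?cardG_gt0 // => /eqP <-.
  by move: iHL'; rewrite p'natE // dvdn2 negbK.
have [t /setIP[St tV] tt] : exists2 t, t \in S :&: dc H u & t * t = 1.
  apply: (@parity_inv #|S :&: dc H u|) => //.
  move=> y /setIP[Sy yV]; rewrite inE iS //=.
  by rewrite -(dc_selfE y^-1 su') dc_invE invgK.
case/dcP: tV => a Ha [b Hb te].
pose w := b * t * b^-1.
have ww : w * w = 1 by rewrite /w !mulgA mulgKV -(mulgA b) tt mulg1 mulgV.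
have swpw : swpb H u w.
  have wu : w * u^-1 \in H.
    by rewrite /w te !mulgA mulgK mulgK groupM.
  apply/andP; split => //.
  have -> : u * w = (w * u^-1)^-1 by rewrite invMg invgK (inv_sq ww).
  by rewrite groupV.
have gN : group_set [set g | fixb H u g || swpb H u g].
  apply/andP; split.
    by rewrite inE /fixb group1 mulg1 mulgV group1.
  apply/subsetP => _ /mulsgP[g h Ng Nh ->]; rewrite !inE in Ng Nh *.
  case/orP: Ng => Ng; case/orP: Nh => Nh.
  - by rewrite fixM.
  - by rewrite fixS ?orbT.
  - by rewrite swpF ?orbT.
  - by rewrite swpS.
pose N := Group gN.
have mL' g : (g \in L') = fixb H u g.
  by rewrite inE mem_conjg conjgE invgK /fixb mulgA.
have mN g : (g \in N) = fixb H u g || swpb H u g by rewrite inE.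
have sL'N : L' \subset N by apply/subsetP => g; rewrite mL' mN => ->.
have nfs g : fixb H u g -> swpb H u g -> False.
  by move=> h1 h2; case/negP: nHu; apply: fix_swp h1 h2.
have cN : #|N| = (2 * #|L'|)%N.
  apply: (@idx2 N L' w) => //.
  - by rewrite mN swpw orbT.
  - by rewrite mL'; apply/negP => h; apply: nfs h swpw.
  move=> g; rewrite mN mL' => /orP[-> //|sg _].
  by rewrite mL' swpS ?swpV.
case/dcP: su => a0 Da0 [b0 Db0 e0].
pose s0 := a0 * u.
have swps0 : swpb H u s0.
  apply/andP; split; first by rewrite /s0 mulgK (subsetP sDH).
  have -> : u * s0 = (u * u^-1) * b0^-1 by rewrite [in RHS]e0 /s0 !mulgA mulgK.
  by rewrite mulgV mul1g groupV (subsetP sDH).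
have Ks0 : s0 \in K by rewrite groupM // (subsetP sDK).
set ND := (N :&: K)%G.
set FD := (L' :&: K)%G.
have cND : #|ND| = (2 * #|FD|)%N.
  apply: (@idx2 ND FD s0).
  - by apply: setSI.
  - by apply/setIP; split => //; rewrite mN swps0 orbT.
  - by apply/setIP => -[h _]; move: h; rewrite mL' => h; apply: nfs h swps0.
  move=> g /setIP[]; rewrite mN => /orP[Fg|Sg] Kg nF.
    by case/negP: nF; apply/setIP; rewrite mL'.
  by apply/setIP; rewrite mL' swpS ?swpV // groupM ?groupV.
have sQD : Q \subset D by apply: subset_trans sQL sL0D.
have sQFD : Q \subset FD by rewrite subsetI sQL' (subset_trans sQD sDK).
have sylQFD := pHall_subl sQFD (subsetIl _ _) sylQL'.
have [P sylP] := Sylow_exists 2 ND.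
have sPND : P \subset ND by case/and3P: sylP.
have sNDN : ND \subset N by apply: subsetIl.
have sylPN : 2.-Sylow(N) P.
  apply/pHallP; split; first exact: subset_trans sPND sNDN.
  rewrite (card_Hall sylP) cND cN !part2 ?cardG_gt0 //.
  by rewrite -(card_Hall sylQFD) -(card_Hall sylQL').
have pw : 2.-group <[w]>.
  rewrite /pgroup; apply: (@pnat_dvd _ 2); last exact: pnat_id.
  by rewrite order_dvdn expgS expg1 ww.
have Nw : w \in N by rewrite mN swpw orbT.
have sWN : <[w]> \subset N by rewrite cycle_subG.
have [g Ng sub] := Sylow_Jsub sylPN sWN pw.
have Pw' : w ^ g \in P by apply: (subsetP sub); rewrite memJ_conjg cycle_id.
have Kw' : w ^ g \in K by have := subsetP sPND _ Pw'; rewrite inE => /andP[].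
have swpw' : swpb H u (w ^ g).
  rewrite conjgE mulgA; move: Ng; rewrite mN => /orP[fg|sg].
    exact: swpF (fixS (fixV fg) swpw) fg.
  exact: fixS (swpS (swpV sg) swpw) sg.
exists (w ^ g); last by rewrite -conjMg ww conj1g.
apply/dcP; exists (w ^ g * u^-1); last by exists 1; rewrite ?mulg1 ?mulgKV.
by rewrite inE; case/andP: swpw' => -> _; rewrite groupM ?groupV.
Qed.

End Aux.

Local Close Scope group_scope.
Theorem lemma4p3 (gT : finGroupType) (G H K : {group gT}) :
  H \subset G -> K \subset G -> group_set (H * K)%g ->
  (#|H|)`_2 = (#|H :&: K|)`_2 ->
  (group_perfect_code K (H :&: K) <-> group_perfect_code (H * K)%g H).
Proof.
move=> sHG sKG gHK p2.
pose X := Group gHK.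
have sHX : H \subset X by apply: mulG_subl.
have sKX : K \subset X by apply: mulG_subr.
have sDK : H :&: K \subset K by apply: subsetIr.
have sDH : H :&: K \subset H by apply: subsetIl.
have e1 := @pc_good _ K (H :&: K)%G sDK.
have e2 := @pc_good _ X H sHX.
split => [/e1 [T [sTK iT nTD cT]] | /e2 [S gS]].
  apply/e2; exists T; split => //.
  - exact: subset_trans sTK sKX.
  - move=> s Ts; apply/negP => Hs; case/negP: (nTD s Ts).
    by rewrite inE Hs (subsetP sTK).
  move=> x /mulsgP[h k Hh Kk ->] nHx.
  have nDk : k \notin H :&: K.
    by apply: contra nHx; rewrite inE => /andP[Hk _]; apply: groupM.
  rewrite -(cT k Kk nDk); apply: eq_card => y; rewrite !inE !mem_rcoset.
  case: (boolP (y \in T)) => //= Ty.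
  have Ky := subsetP sTK y Ty.
  by rewrite invMg mulgA (groupMr _ (groupVr Hh)) inE (groupM Ky (groupVr Kk)) andbT.
apply/e1; apply: construct => // u Ku nDu su nd.
exact: (dir2_core sHX sKX p2 gS Ku nDu su nd).
Qed.
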